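(* Let $R,L,C,V_{dc},T>0$, and let $A_1,A_2,\boldsymbol{b}_1$ and the switched system be as in the context. Then the matrix $I-\mathrm{e}^{\frac{T}{2}A_2}\mathrm{e}^{\frac{T}{2}A_1}$ is invertible, and the system has a unique $T$-periodic continuous solution $\boldsymbol{x}_p$. This solution is given on one period by $$\boldsymbol{x}_p(t)=\begin{cases}\mathrm{e}^{tA_1}\boldsymbol{x}_p(0)+A_1^{-1}(\mathrm{e}^{tA_1}-I)\boldsymbol{b}_1, & t\in[0,\tfrac T2],\\[1mm] \mathrm{e}^{(t-\frac T2)A_2}\boldsymbol{x}_p(\tfrac T2), & t\in(\tfrac T2,T],\end{cases}$$ where $$\boldsymbol{x}_p(0)=\left(I-\mathrm{e}^{\frac{T}{2}A_2}\mathrm{e}^{\frac{T}{2}A_1}\right)^{-1}\mathrm{e}^{\frac{T}{2}A_2}A_1^{-1}\left(\mathrm{e}^{\frac{T}{2}A_1}-I\right)\boldsymbol{b}_1 .$$ The periodic solution is globally asymptotically stable: for every initial value $\boldsymbol{x}(0)=\boldsymbol{x}_0\in\mathbb{R}^2$, the continuous solution $\boldsymbol{x}$ satisfies $\boldsymbol{x}(t)-\boldsymbol{x}_p(t)\to 0$ as $t\to\infty$.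
   Context: Let $R,L,C,V_{dc},T>0$ be parameters. Let $\boldsymbol{x}(t)=[i(t),v(t)]^{\intercal}$ (inductor current $i$, capacitor voltage $v$). Define $$A_1=\begin{bmatrix}-\frac RL & -\frac1L\\ \frac1C & 0\end{bmatrix},\quad A_2=\begin{bmatrix}-\frac RL & \frac1L\\ -\frac1C & 0\end{bmatrix},\quad \boldsymbol{b}_1=\begin{bmatrix}\frac{V_{dc}}L\\ 0\end{bmatrix}.$$ The switched system on $t\ge 0$ is: $\boldsymbol{x}'=A_1\boldsymbol{x}+\boldsymbol{b}_1$ on each interval $[(k-1)T,(k-1)T+\frac T2]$ and $\boldsymbol{x}'=A_2\boldsymbol{x}$ on each interval $[(k-1)T+\frac T2,kT]$, $k=1,2,3,\dots$; i.e. the first system is used when $t \bmod T<T/2$ and the second otherwise. A solution is a continuous function $\boldsymbol{x}:[0,\infty)\to\mathbb{R}^2$ satisfying these equations on each interval. $\mathrm{e}^{tA}$ denotes the matrix exponential. *)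

(* Defs.v *)
From Stdlib Require Import Reals Lra Arith ClassicalEpsilon.
Open Scope R_scope.

Record Mat2 := mkM { m11 : R; m12 : R; m21 : R; m22 : R }.
Record Vec2 := mkV { v1 : R; v2 : R }.

Definition mI : Mat2 := mkM 1 0 0 1.
Definition mZ : Mat2 := mkM 0 0 0 0.
Definition madd (A B : Mat2) : Mat2 :=
  mkM (m11 A + m11 B) (m12 A + m12 B) (m21 A + m21 B) (m22 A + m22 B).
Definition msub (A B : Mat2) : Mat2 :=
  mkM (m11 A - m11 B) (m12 A - m12 B) (m21 A - m21 B) (m22 A - m22 B).
Definition mscale (c : R) (A : Mat2) : Mat2 :=
  mkM (c * m11 A) (c * m12 A) (c * m21 A) (c * m22 A).
Definition mmul (A B : Mat2) : Mat2 :=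
  mkM (m11 A * m11 B + m12 A * m21 B) (m11 A * m12 B + m12 A * m22 B)
      (m21 A * m11 B + m22 A * m21 B) (m21 A * m12 B + m22 A * m22 B).
Definition mvmul (A : Mat2) (x : Vec2) : Vec2 :=
  mkV (m11 A * v1 x + m12 A * v2 x) (m21 A * v1 x + m22 A * v2 x).
Definition vadd (x y : Vec2) : Vec2 := mkV (v1 x + v1 y) (v2 x + v2 y).
Definition vsub (x y : Vec2) : Vec2 := mkV (v1 x - v1 y) (v2 x - v2 y).
Definition vnorm (x : Vec2) : R := sqrt (v1 x ^ 2 + v2 x ^ 2).

Definition mdet (A : Mat2) : R := m11 A * m22 A - m12 A * m21 A.
Definition minvertible (A : Mat2) : Prop :=
  exists B : Mat2, mmul A B = mI /\ mmul B A = mI.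
(* The inverse of a 2x2 matrix (adjugate / determinant); it is the genuine
   inverse whenever the matrix is invertible. *)
Definition minv (A : Mat2) : Mat2 :=
  mscale (/ mdet A) (mkM (m22 A) (- m12 A) (- m21 A) (m11 A)).

Fixpoint mpow (A : Mat2) (k : nat) : Mat2 :=
  match k with O => mI | S k' => mmul A (mpow A k') end.

Fixpoint mexp_partial (A : Mat2) (n : nat) : Mat2 :=
  match n with
  | O => mI
  | S n' => madd (mexp_partial A n') (mscale (/ INR (Factorial.fact (S n'))) (mpow A (S n')))
  end.

Definition is_mexp (A E : Mat2) : Prop :=
  Un_cv (fun n => m11 (mexp_partial A n)) (m11 E) /\
  Un_cv (fun n => m12 (mexp_partial A n)) (m12 E) /\
  Un_cv (fun n => m21 (mexp_partial A n)) (m21 E) /\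
  Un_cv (fun n => m22 (mexp_partial A n)) (m22 E).

Definition mexp (A : Mat2) : Mat2 :=
  epsilon (inhabits mZ) (fun E => is_mexp A E).

Definition mexpt (t : R) (A : Mat2) : Mat2 := mexp (mscale t A).

Definition Amat1 (Rr L C : R) : Mat2 := mkM (- Rr / L) (- / L) (/ C) 0.
Definition Amat2 (Rr L C : R) : Mat2 := mkM (- Rr / L) (/ L) (- / C) 0.
Definition b1 (L Vdc : R) : Vec2 := mkV (Vdc / L) 0.

(* derivative of f at t, within the closed interval [a,b]
   (one-sided at the endpoints) *)
Definition deriv_within (a b : R) (f : R -> R) (t l : R) : Prop :=
  limit1_in (fun s => (f s - f t) / (s - t))
            (fun s => a <= s <= b /\ s <> t) l t.

Definition solves_on (a b : R) (A : Mat2) (c : Vec2) (x : R -> Vec2) : Prop :=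
  forall t, a <= t <= b ->
    deriv_within a b (fun s => v1 (x s)) t (v1 (vadd (mvmul A (x t)) c)) /\
    deriv_within a b (fun s => v2 (x s)) t (v2 (vadd (mvmul A (x t)) c)).

Definition vzero : Vec2 := mkV 0 0.

Definition is_solution (Rr L C Vdc T : R) (x : R -> Vec2) : Prop :=
  (forall t, 0 <= t ->
     limit1_in (fun s => v1 (x s)) (fun s => 0 <= s) (v1 (x t)) t /\
     limit1_in (fun s => v2 (x s)) (fun s => 0 <= s) (v2 (x t)) t) /\
  (forall k : nat, (1 <= k)%nat ->
     solves_on (INR (k - 1) * T) (INR (k - 1) * T + T / 2)
               (Amat1 Rr L C) (b1 L Vdc) x /\
     solves_on (INR (k - 1) * T + T / 2) (INR k * T)
               (Amat2 Rr L C) vzero x).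

Definition T_periodic (T : R) (x : R -> Vec2) : Prop :=
  forall t, 0 <= t -> x (t + T) = x t.

(* Main.v *)
Require Import Defs.
From Stdlib Require Import Reals Lra Psatz ClassicalEpsilon ZArith Lia.
From Coquelicot Require Import Coquelicot.
Open Scope R_scope.

Lemma Mat2_eq : forall A B : Mat2, m11 A = m11 B -> m12 A = m12 B ->
  m21 A = m21 B -> m22 A = m22 B -> A = B.
Proof. intros [] []; simpl; intros; subst; reflexivity. Qed.
Lemma Vec2_eq : forall x y : Vec2, v1 x = v1 y -> v2 x = v2 y -> x = y.
Proof. intros [] []; simpl; intros; subst; reflexivity. Qed.

Definition mbnd (P : Mat2) (M : R) := Rabs (m11 P) <= M /\ Rabs (m12 P) <= M /\
  Rabs (m21 P) <= M /\ Rabs (m22 P) <= M.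
Definition mcn (A : Mat2) : R := Rabs (m11 A) + Rabs (m12 A) + Rabs (m21 A) + Rabs (m22 A).

Lemma comb_bnd : forall a b x y M, Rabs x <= M -> Rabs y <= M ->
  Rabs (a * x + b * y) <= (Rabs a + Rabs b) * M.
Proof.
  intros. eapply Rle_trans; [apply Rabs_triang|]. rewrite !Rabs_mult.
  pose proof (Rabs_pos a); pose proof (Rabs_pos b).
  assert (Rabs a * Rabs x <= Rabs a * M) by (apply Rmult_le_compat_l; lra).
  assert (Rabs b * Rabs y <= Rabs b * M) by (apply Rmult_le_compat_l; lra). lra.
Qed.

Lemma mpow_bnd : forall A k, mbnd (mpow A k) (mcn A ^ k).
Proof.
  intros A k. assert (Hc : 0 <= mcn A).
  { unfold mcn. pose proof (Rabs_pos (m11 A)); pose proof (Rabs_pos (m12 A));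
    pose proof (Rabs_pos (m21 A)); pose proof (Rabs_pos (m22 A)); lra. }
  induction k as [|k [H1 [H2 [H3 H4]]]]; simpl.
  - unfold mbnd; simpl; rewrite Rabs_R1, Rabs_R0; lra.
  - assert (HM : 0 <= mcn A ^ k) by (apply pow_le; lra).
    pose proof (Rabs_pos (m11 A)); pose proof (Rabs_pos (m12 A));
    pose proof (Rabs_pos (m21 A)); pose proof (Rabs_pos (m22 A)).
    unfold mbnd, mcn in *; simpl; repeat split.
    + eapply Rle_trans; [apply comb_bnd; eassumption|]. nra.
    + eapply Rle_trans; [apply comb_bnd; eassumption|]. nra.
    + eapply Rle_trans; [apply comb_bnd; eassumption|]. nra.
    + eapply Rle_trans; [apply comb_bnd; eassumption|]. nra.
Qed.

Definition coef (f : Mat2 -> R) (A : Mat2) (k : nat) : R := f (mpow A k) / INR (Factorial.fact k).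

Definition entry (f : Mat2 -> R) : Prop :=
  (forall P M, mbnd P M -> Rabs (f P) <= M) /\
  (forall P Q, f (madd P Q) = f P + f Q) /\ (forall c P, f (mscale c P) = c * f P).

Lemma entry11 : entry m11. Proof. split; [intros P M [? ?]; auto| split; reflexivity]. Qed.
Lemma entry12 : entry m12. Proof. split; [intros P M [? [? ?]]; auto| split; reflexivity]. Qed.
Lemma entry21 : entry m21. Proof. split; [intros P M [? [? [? ?]]]; auto| split; reflexivity]. Qed.
Lemma entry22 : entry m22. Proof. split; [intros P M [? [? [? ?]]]; auto| split; reflexivity]. Qed.

Lemma exp_sum : forall y, Un_cv (fun n => sum_f_R0 (fun k => y ^ k / INR (Factorial.fact k)) n) (exp y).
Proof.
  intros y. pose proof (is_exp_Reals y) as H. unfold is_pseries in H.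
  apply is_series_Reals in H. intros eps Heps. destruct (H eps Heps) as [N HN].
  exists N. intros n Hn. specialize (HN n Hn).
  rewrite (sum_eq _ (fun k => scal (pow_n y k) (/ INR (Factorial.fact k)))); [exact HN|].
  intros i _. replace (pow_n y i) with (y ^ i) by (symmetry; apply pow_n_pow). reflexivity.
Qed.

Lemma radius_inf : forall f A x, entry f -> Rbar_lt (Rabs x) (CV_radius (coef f A)).
Proof.
  intros f A x [Hb _].
  assert (Hr : 0 < Rabs x + 1) by (pose proof (Rabs_pos x); lra).
  set (r := mkposreal _ Hr).
  assert (Hc : 0 <= mcn A).
  { unfold mcn. pose proof (Rabs_pos (m11 A)); pose proof (Rabs_pos (m12 A));
    pose proof (Rabs_pos (m21 A)); pose proof (Rabs_pos (m22 A)); lra. }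
  assert (X : CVN_r (fun n y => coef f A n * y ^ n) r).
  { exists (fun k => (mcn A * r) ^ k / INR (Factorial.fact k)).
    exists (exp (mcn A * r)). split.
    - intros eps Heps. destruct (exp_sum (mcn A * r) eps Heps) as [N HN]. exists N.
      intros n Hn. erewrite sum_eq; [apply HN; exact Hn|]. intros i _.
      rewrite Rabs_right; [reflexivity|]. apply Rle_ge. apply Rmult_le_pos.
      apply pow_le. simpl; nra. left; apply Rinv_0_lt_compat, INR_fact_lt_0.
    - intros n y Hy. unfold Boule in Hy. rewrite Rminus_0_r in Hy. simpl in Hy.
      unfold coef. rewrite Rabs_mult. unfold Rdiv. rewrite Rabs_mult.
      rewrite (Rabs_right (/ _)) by (left; apply Rinv_0_lt_compat, INR_fact_lt_0).
      rewrite <- RPow_abs. rewrite Rpow_mult_distr.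
      pose proof (Hb _ _ (mpow_bnd A n)) as Hf.
      assert (Hi : 0 < / INR (Factorial.fact n)) by (apply Rinv_0_lt_compat, INR_fact_lt_0).
      assert (Ha : 0 <= Rabs (f (mpow A n))) by apply Rabs_pos.
      assert (Hp : Rabs y ^ n <= (Rabs x + 1) ^ n).
      { apply pow_incr. split; [apply Rabs_pos| lra]. }
      assert (0 <= Rabs y ^ n) by (apply pow_le, Rabs_pos).
      assert (0 <= mcn A ^ n) by (apply pow_le; lra).
      assert (Rabs (f (mpow A n)) * Rabs y ^ n <= mcn A ^ n * (Rabs x + 1) ^ n).
      { apply Rmult_le_compat; auto. }
      change (pos r) with (Rabs x + 1). nra. }
  pose proof (CV_radius_Reals_1 _ _ X) as Hle.
  eapply Rbar_lt_le_trans; [|exact Hle]. simpl. lra.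
Qed.

Lemma mpow_scale : forall t A k, mpow (mscale t A) k = mscale (t ^ k) (mpow A k).
Proof.
  intros t A k; induction k; simpl.
  - apply Mat2_eq; simpl; ring.
  - rewrite IHk. apply Mat2_eq; simpl; ring.
Qed.

Lemma partial_entry : forall f t A n, entry f ->
  f (mexp_partial (mscale t A) n) = sum_f_R0 (fun k => coef f A k * t ^ k) n.
Proof.
  intros f t A n [_ [Ha Hs]]. induction n.
  - simpl. unfold coef. simpl. field.
  - replace (mexp_partial (mscale t A) (S n)) with (madd (mexp_partial (mscale t A) n)
      (mscale (/ INR (Factorial.fact (S n))) (mpow (mscale t A) (S n)))) by reflexivity.
    rewrite Ha, Hs, IHn, mpow_scale, Hs.
    replace (sum_f_R0 (fun k => coef f A k * t ^ k) (S n)) with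
      (sum_f_R0 (fun k => coef f A k * t ^ k) n + coef f A (S n) * t ^ (S n)) by reflexivity.
    unfold coef. field. apply INR_fact_neq_0.
Qed.

Lemma cv_entry : forall f t A, entry f ->
  Un_cv (fun n => f (mexp_partial (mscale t A) n)) (PSeries (coef f A) t).
Proof.
  intros f t A Hf.
  pose proof (PSeries_correct _ _ (CV_radius_inside _ _ (radius_inf f A t Hf))) as H.
  unfold is_pseries in H. apply is_series_Reals in H.
  intros eps Heps. destruct (H eps Heps) as [N HN]. exists N. intros n Hn.
  rewrite partial_entry by exact Hf.
  rewrite (sum_eq _ (fun k => scal (pow_n t k) (coef f A k))); [apply HN; exact Hn|].
  intros i _. replace (pow_n t i) with (t ^ i) by (symmetry; apply pow_n_pow).
  unfold scal; simpl; unfold mult; simpl. ring.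
Qed.

Lemma mexpt_eq : forall t A, mexpt t A =
  mkM (PSeries (coef m11 A) t) (PSeries (coef m12 A) t)
      (PSeries (coef m21 A) t) (PSeries (coef m22 A) t).
Proof.
  intros t A. unfold mexpt, mexp.
  assert (Hex : exists E, is_mexp (mscale t A) E).
  { exists (mkM (PSeries (coef m11 A) t) (PSeries (coef m12 A) t)
      (PSeries (coef m21 A) t) (PSeries (coef m22 A) t)).
    split; [|split; [|split]].
    - exact (cv_entry m11 t A entry11).
    - exact (cv_entry m12 t A entry12).
    - exact (cv_entry m21 t A entry21).
    - exact (cv_entry m22 t A entry22). }
  pose proof (epsilon_spec (inhabits mZ) _ Hex) as [H1 [H2 [H3 H4]]].
  apply Mat2_eq; simpl; eapply UL_sequence.
  - exact H1. - exact (cv_entry m11 t A entry11).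
  - exact H2. - exact (cv_entry m12 t A entry12).
  - exact H3. - exact (cv_entry m21 t A entry21).
  - exact H4. - exact (cv_entry m22 t A entry22).
Qed.

Lemma PS_derive_coef : forall f A n,
  PS_derive (coef f A) n = f (mmul A (mpow A n)) / INR (Factorial.fact n).
Proof.
  intros f A n. unfold PS_derive, coef. simpl mpow.
  rewrite fact_simpl, mult_INR. field. split. apply INR_fact_neq_0.
  apply not_0_INR. lia.
Qed.

Lemma der_gen : forall f g h A a b t, entry f -> entry g -> entry h ->
  (forall n, PS_derive (coef f A) n = a * coef g A n + b * coef h A n) ->
  is_derive (PSeries (coef f A)) t (a * PSeries (coef g A) t + b * PSeries (coef h A) t).
Proof.
  intros f g h A a b t Hf Hg Hh Hd.
  replace (a * PSeries (coef g A) t + b * PSeries (coef h A) t)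
    with (PSeries (PS_derive (coef f A)) t).
  - apply is_derive_PSeries, radius_inf, Hf.
  - rewrite (PSeries_ext _ (PS_plus (PS_scal a (coef g A)) (PS_scal b (coef h A)))).
    + rewrite PSeries_plus. rewrite !PSeries_scal. reflexivity.
      * apply ex_pseries_scal. apply Rmult_comm.
        apply CV_radius_inside, radius_inf, Hg.
      * apply ex_pseries_scal. apply Rmult_comm.
        apply CV_radius_inside, radius_inf, Hh.
    + intros n. rewrite Hd. reflexivity.
Qed.

Lemma mexpt_der : forall A t,
  derivable_pt_lim (fun s => m11 (mexpt s A)) t (m11 (mmul A (mexpt t A))) /\
  derivable_pt_lim (fun s => m12 (mexpt s A)) t (m12 (mmul A (mexpt t A))) /\
  derivable_pt_lim (fun s => m21 (mexpt s A)) t (m21 (mmul A (mexpt t A))) /\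
  derivable_pt_lim (fun s => m22 (mexpt s A)) t (m22 (mmul A (mexpt t A))).
Proof.
  intros A t. rewrite (mexpt_eq t A). simpl.
  repeat split; apply is_derive_Reals;
  (eapply is_derive_ext; [intro s; rewrite (mexpt_eq s A); reflexivity|]); simpl.
  - apply der_gen; try apply entry11; try apply entry21.
    intros n. rewrite PS_derive_coef. unfold coef. simpl. field. apply INR_fact_neq_0.
  - apply der_gen; try apply entry12; try apply entry22.
    intros n. rewrite PS_derive_coef. unfold coef. simpl. field. apply INR_fact_neq_0.
  - apply der_gen; try apply entry11; try apply entry21.
    intros n. rewrite PS_derive_coef. unfold coef. simpl. field. apply INR_fact_neq_0.
  - apply der_gen; try apply entry12; try apply entry22.
    intros n. rewrite PS_derive_coef. unfold coef. simpl. field. apply INR_fact_neq_0.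
Qed.

Lemma mexpt_0 : forall A, mexpt 0 A = mI.
Proof.
  intros A. rewrite mexpt_eq. rewrite !PSeries_0. unfold coef. simpl.
  apply Mat2_eq; simpl; field.
Qed.

Lemma dw_interior : forall a b f t l, deriv_within a b f t l -> a < t < b ->
  derivable_pt_lim f t l.
Proof.
  intros a b f t l H Ht eps Heps.
  destruct (H eps Heps) as [alp [Halp Hq]].
  assert (Hd : 0 < Rmin alp (Rmin (t - a) (b - t))).
  { apply Rmin_glb_lt; [lra|apply Rmin_glb_lt; lra]. }
  exists (mkposreal _ Hd). intros h Hh0 Hh. simpl in Hh.
  assert (H1 := Rmin_l alp (Rmin (t - a) (b - t))).
  assert (H2 := Rmin_r alp (Rmin (t - a) (b - t))).
  assert (H3 := Rmin_l (t - a) (b - t)). assert (H4 := Rmin_r (t - a) (b - t)).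
  assert (Hb : Rabs h < t - a /\ Rabs h < b - t) by lra.
  destruct Hb as [Hb1 Hb2]. apply Rabs_def2 in Hb1. apply Rabs_def2 in Hb2.
  specialize (Hq (t + h)). simpl in Hq. unfold Rdist in Hq.
  replace (t + h - t) with h in Hq by ring. apply Hq. split.
  - split; [lra|]. intro E. apply Hh0. lra.
  - lra.
Qed.

Lemma dw_cont : forall a b f t l, deriv_within a b f t l ->
  limit1_in f (fun s => a <= s <= b) (f t) t.
Proof.
  intros a b f t l H eps Heps.
  destruct (H 1 Rlt_0_1) as [alp [Halp Hq]].
  assert (Hl : 0 < Rabs l + 1) by (pose proof (Rabs_pos l); lra).
  exists (Rmin alp (eps / (Rabs l + 1))). split.
  { apply Rmin_glb_lt; [lra|]. apply Rdiv_lt_0_compat; lra. }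
  intros s [Hs Hst]. simpl in *. unfold Rdist in *.
  assert (H1 := Rmin_l alp (eps / (Rabs l + 1))).
  assert (H2 := Rmin_r alp (eps / (Rabs l + 1))).
  destruct (Req_dec s t) as [E|E].
  - subst. replace (f t - f t) with 0 by ring. rewrite Rabs_R0. lra.
  - assert (Hsd : dist R_met s t < alp) by (simpl; unfold Rdist; lra). specialize (Hq s (conj (conj Hs E) Hsd)).
    set (q := (f s - f t) / (s - t)) in Hq.
    assert (Hfq : f s - f t = q * (s - t)) by (unfold q; field; lra).
    rewrite Hfq, Rabs_mult.
    assert (Rabs q < Rabs l + 1).
    { pose proof (Rabs_triang_inv q l). lra. }
    assert (Hst2 : Rabs (s - t) < eps / (Rabs l + 1)) by lra.
    assert (0 <= Rabs (s - t)) by apply Rabs_pos.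
    assert (0 <= Rabs q) by apply Rabs_pos.
    apply Rle_lt_trans with ((Rabs l + 1) * Rabs (s - t)).
    + apply Rmult_le_compat_r; lra.
    + apply Rmult_lt_compat_l with (r := Rabs l + 1) in Hst2; [|lra].
      replace ((Rabs l + 1) * (eps / (Rabs l + 1))) with eps in Hst2 by (field; lra). lra.
Qed.

Lemma dpl_within : forall a b f t l, derivable_pt_lim f t l -> deriv_within a b f t l.
Proof.
  intros a b f t l H eps Heps. destruct (H eps Heps) as [d Hd].
  exists d. split; [apply cond_pos|]. intros s [[Hs E] Hst]. simpl in *. unfold Rdist in *.
  specialize (Hd (s - t) ltac:(intro; apply E; lra) Hst). replace (t + (s - t)) with s in Hd by ring. exact Hd.
Qed.

Lemma dw_ext : forall a b f g t l, (forall s, a <= s <= b -> f s = g s) -> a <= t <= b ->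
  deriv_within a b f t l -> deriv_within a b g t l.
Proof.
  intros a b f g t l He Ht H eps Heps. destruct (H eps Heps) as [d [Hd Hq]].
  exists d. split; [exact Hd|]. intros s Hs. destruct Hs as [[Hs1 Hs2] Hs3].
  rewrite <- (He s Hs1), <- (He t Ht). apply Hq. tauto.
Qed.

Lemma dw_minus : forall a b f g t l l', deriv_within a b f t l -> deriv_within a b g t l' ->
  deriv_within a b (fun s => f s - g s) t (l - l').
Proof.
  intros a b f g t l l' Hf Hg. unfold deriv_within.
  pose proof (limit_minus _ _ _ _ _ _ Hf Hg) as H.
  intros eps Heps. destruct (H eps Heps) as [d [Hd Hq]]. exists d. split; [exact Hd|].
  intros s Hs. specialize (Hq s Hs). destruct Hs as [[_ E] _].
  replace ((f s - g s - (f t - g t)) / (s - t)) with ((f s - f t) / (s - t) - (g s - g t) / (s - t)).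
  exact Hq. field. lra.
Qed.

Lemma dpl_ext : forall f g t l l', (forall s, f s = g s) -> l = l' ->
  derivable_pt_lim f t l -> derivable_pt_lim g t l'.
Proof.
  intros f g t l l' He El H eps Heps. destruct (H eps Heps) as [d Hd]. exists d.
  intros h Hh1 Hh2. rewrite <- !He, <- El. apply Hd; assumption.
Qed.

Lemma lim_ext : forall f g D l t, (forall s, f s = g s) -> limit1_in f D l t -> limit1_in g D l t.
Proof.
  intros f g D l t He H eps Heps. destruct (H eps Heps) as [d [Hd Hq]]. exists d.
  split; [exact Hd|]. intros s Hs. rewrite <- He. apply Hq; exact Hs.
Qed.

Lemma lim_const : forall D c t, limit1_in (fun _ => c) D c t.
Proof.
  intros D c t eps Heps. exists 1. split; [lra|]. intros s _. simpl. unfold Rdist.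
  replace (c - c) with 0 by ring. rewrite Rabs_R0. lra.
Qed.

Lemma dpl_quad : forall p q f g t l1 l2, derivable_pt_lim f t l1 -> derivable_pt_lim g t l2 ->
  derivable_pt_lim (fun s => p * f s ^ 2 + q * g s ^ 2) t (2 * p * f t * l1 + 2 * q * g t * l2).
Proof.
  intros p q f g t l1 l2 Hf Hg.
  pose proof (derivable_pt_lim_plus _ _ _ _ _
    (derivable_pt_lim_scal _ p _ _ (derivable_pt_lim_mult _ _ _ _ _ Hf Hf))
    (derivable_pt_lim_scal _ q _ _ (derivable_pt_lim_mult _ _ _ _ _ Hg Hg))) as H.
  eapply dpl_ext; [| |exact H].
  - intros s. unfold plus_fct, mult_real_fct, mult_fct. ring.
  - unfold mult_fct. ring.
Qed.

Lemma lim_quad : forall p q f g D t, limit1_in f D (f t) t -> limit1_in g D (g t) t ->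
  limit1_in (fun s => p * f s ^ 2 + q * g s ^ 2) D (p * f t ^ 2 + q * g t ^ 2) t.
Proof.
  intros p q f g D t Hf Hg.
  pose proof (limit_plus _ _ _ _ _ _
    (limit_mul _ _ _ _ _ _ (lim_const D p t) (limit_mul _ _ _ _ _ _ Hf Hf))
    (limit_mul _ _ _ _ _ _ (lim_const D q t) (limit_mul _ _ _ _ _ _ Hg Hg))) as H.
  replace (p * f t ^ 2 + q * g t ^ 2) with (p * (f t * f t) + q * (g t * g t)) by ring.
  eapply lim_ext; [|exact H]. intros s. simpl. ring.
Qed.

Lemma mono_interior : forall f df a b, (forall t, a < t < b -> derivable_pt_lim f t (df t)) ->
  (forall t, a < t < b -> df t <= 0) ->
  forall s t, a < s -> s < t -> t < b -> f t <= f s.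
Proof.
  intros f df a b Hd Hneg s t H1 H2 H3.
  destruct (MVT_gen f s t df) as [c [Hc Hfc]].
  - intros x Hx. rewrite Rmin_left in Hx by lra. rewrite Rmax_right in Hx by lra.
    apply is_derive_Reals. apply Hd. lra.
  - intros x Hx. rewrite Rmin_left in Hx by lra. rewrite Rmax_right in Hx by lra.
    apply derivable_continuous_pt. exists (df x). apply Hd. lra.
  - rewrite Rmin_left in Hc by lra. rewrite Rmax_right in Hc by lra.
    assert (df c <= 0) by (apply Hneg; lra). nra.
Qed.

Lemma mono : forall f df a b,
  (forall t, a <= t <= b -> limit1_in f (fun s => a <= s <= b) (f t) t) ->
  (forall t, a < t < b -> derivable_pt_lim f t (df t)) ->
  (forall t, a < t < b -> df t <= 0) ->
  forall s t, a <= s -> s <= t -> t <= b -> f t <= f s.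
Proof.
  intros f df a b Hc Hd Hneg s t H1 H2 H3.
  destruct (Req_dec s t) as [E|E]; [subst; lra|].
  destruct (Rle_or_lt (f t) (f s)) as [|Hlt]; [assumption|exfalso].
  set (eps := (f t - f s) / 3).
  assert (Heps : eps > 0) by (unfold eps; lra).
  destruct (Hc s ltac:(lra) eps Heps) as [d1 [Hd1 Hq1]].
  destruct (Hc t ltac:(lra) eps Heps) as [d2 [Hd2 Hq2]].
  set (d := Rmin (Rmin (d1 / 2) (d2 / 2)) ((t - s) / 3)).
  assert (Hdp : 0 < d) by (unfold d; repeat apply Rmin_glb_lt; lra).
  assert (Hda := Rmin_l (Rmin (d1 / 2) (d2 / 2)) ((t - s) / 3)).
  assert (Hdb := Rmin_r (Rmin (d1 / 2) (d2 / 2)) ((t - s) / 3)).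
  assert (Hdc := Rmin_l (d1 / 2) (d2 / 2)). assert (Hdd := Rmin_r (d1 / 2) (d2 / 2)).
  fold d in Hda, Hdb.
  specialize (Hq1 (s + d)). specialize (Hq2 (t - d)). simpl in Hq1, Hq2. unfold Rdist in *.
  replace (s + d - s) with d in Hq1 by ring. replace (t - d - t) with (- d) in Hq2 by ring.
  rewrite Rabs_Ropp in Hq2. rewrite Rabs_right in Hq1, Hq2 by lra.
  assert (A1 : Rabs (f (s + d) - f s) < eps) by (apply Hq1; split; [lra|lra]).
  assert (A2 : Rabs (f (t - d) - f t) < eps) by (apply Hq2; split; [lra|lra]).
  assert (A3 : f (t - d) <= f (s + d)).
  { apply (mono_interior f df a b Hd Hneg); lra. }
  apply Rabs_def2 in A1. apply Rabs_def2 in A2. unfold eps in *. lra.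
Qed.

Lemma loc_const_der : forall f c t d, 0 < d -> (forall s, Rabs (s - t) < d -> f s = c) ->
  derivable_pt_lim f t 0.
Proof.
  intros f c t d Hd H eps Heps. exists (mkposreal d Hd). intros h Hh0 Hh. simpl in Hh.
  rewrite !H. replace ((c - c) / h - 0) with 0 by (field; auto). rewrite Rabs_R0; lra.
  replace (t - t) with 0 by ring. rewrite Rabs_R0; lra.
  replace (t + h - t) with h by ring. exact Hh.
Qed.

Definition Vn (p q : R) (z : Vec2) : R := p * v1 z ^ 2 + q * v2 z ^ 2.

Definition dissip (p q k : R) (A : Mat2) : Prop :=
  forall x y, p * x * (m11 A * x + m12 A * y) + q * y * (m21 A * x + m22 A * y) = - k * x ^ 2.

Lemma energy_mono : forall p q k A a b z, 0 < k -> dissip p q k A ->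
  solves_on a b A vzero z -> forall s t, a <= s -> s <= t -> t <= b -> Vn p q (z t) <= Vn p q (z s).
Proof.
  intros p q k A a b z Hk HA Hs s t H1 H2 H3. unfold Vn.
  apply (mono (fun t => p * v1 (z t) ^ 2 + q * v2 (z t) ^ 2)
    (fun t => 2 * p * v1 (z t) * v1 (vadd (mvmul A (z t)) vzero) +
              2 * q * v2 (z t) * v2 (vadd (mvmul A (z t)) vzero)) a b); try lra.
  - intros t0 Ht0. destruct (Hs t0 Ht0) as [D1 D2].
    apply lim_quad; eapply dw_cont; eassumption.
  - intros t0 Ht0. destruct (Hs t0 ltac:(lra)) as [D1 D2].
    apply dpl_quad; eapply dw_interior; eassumption.
  - intros t0 _. simpl. specialize (HA (v1 (z t0)) (v2 (z t0))).
    assert (0 <= v1 (z t0) ^ 2) by (apply pow2_ge_0). nra.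
Qed.

Lemma Vn_zero : forall p q z, 0 < p -> 0 < q -> Vn p q z <= 0 -> z = vzero.
Proof.
  intros p q z Hp Hq H. unfold Vn in H.
  assert (0 <= v1 z ^ 2) by apply pow2_ge_0. assert (0 <= v2 z ^ 2) by apply pow2_ge_0.
  assert (v1 z ^ 2 = 0) by nra. assert (v2 z ^ 2 = 0) by nra.
  apply Vec2_eq; simpl; nra.
Qed.

Lemma Vn_nonneg : forall p q z, 0 < p -> 0 < q -> 0 <= Vn p q z.
Proof.
  intros. unfold Vn. assert (0 <= v1 z ^ 2) by apply pow2_ge_0.
  assert (0 <= v2 z ^ 2) by apply pow2_ge_0. nra.
Qed.

Lemma solves_diff : forall a b A c x y, solves_on a b A c x -> solves_on a b A c y ->
  solves_on a b A vzero (fun t => vsub (x t) (y t)).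
Proof.
  intros a b A c x y Hx Hy t Ht. destruct (Hx t Ht) as [X1 X2]. destruct (Hy t Ht) as [Y1 Y2].
  pose proof (dw_minus _ _ _ _ _ _ _ X1 Y1) as D1.
  pose proof (dw_minus _ _ _ _ _ _ _ X2 Y2) as D2.
  split.
  - replace (v1 (vadd (mvmul A (vsub (x t) (y t))) vzero)) with
      (v1 (vadd (mvmul A (x t)) c) - v1 (vadd (mvmul A (y t)) c)) by (simpl; ring).
    exact D1.
  - replace (v2 (vadd (mvmul A (vsub (x t) (y t))) vzero)) with
      (v2 (vadd (mvmul A (x t)) c) - v2 (vadd (mvmul A (y t)) c)) by (simpl; ring).
    exact D2.
Qed.

Lemma uniq_on : forall p q k A a b c x y, 0 < p -> 0 < q -> 0 < k -> dissip p q k A ->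
  solves_on a b A c x -> solves_on a b A c y -> x a = y a ->
  forall t, a <= t <= b -> x t = y t.
Proof.
  intros p q k A a b c x y Hp Hq Hk HA Hx Hy E t Ht.
  pose proof (solves_diff _ _ _ _ _ _ Hx Hy) as Hd.
  pose proof (energy_mono p q k A a b _ Hk HA Hd a t ltac:(lra) ltac:(lra) ltac:(lra)) as HV.
  cbv beta in HV. rewrite E in HV. assert (HV0 : Vn p q (vsub (y a) (y a)) = 0) by (unfold Vn; simpl; ring).
  rewrite HV0 in HV. apply Vn_zero in HV; auto.
  apply Vec2_eq; [assert (H1 := f_equal v1 HV)|assert (H1 := f_equal v2 HV)]; simpl in H1; lra.
Qed.

Lemma mv_assoc : forall P Q x, mvmul (mmul P Q) x = mvmul P (mvmul Q x).
Proof. intros. apply Vec2_eq; simpl; ring. Qed.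
Lemma mv_I : forall x, mvmul mI x = x.
Proof. intros. apply Vec2_eq; simpl; ring. Qed.
Lemma mv_add : forall P x y, mvmul P (vadd x y) = vadd (mvmul P x) (mvmul P y).
Proof. intros. apply Vec2_eq; simpl; ring. Qed.
Lemma mv_msub : forall P Q x, mvmul (msub P Q) x = vsub (mvmul P x) (mvmul Q x).
Proof. intros. apply Vec2_eq; simpl; ring. Qed.

Definition affv (A Ai : Mat2) (b z : Vec2) (u : R) : Vec2 :=
  vadd (mvmul (mexpt u A) z) (mvmul Ai (mvmul (msub (mexpt u A) mI) b)).

Lemma dE_shift : forall A c t,
  derivable_pt_lim (fun s => m11 (mexpt (s - c) A)) t (m11 (mmul A (mexpt (t - c) A))) /\
  derivable_pt_lim (fun s => m12 (mexpt (s - c) A)) t (m12 (mmul A (mexpt (t - c) A))) /\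
  derivable_pt_lim (fun s => m21 (mexpt (s - c) A)) t (m21 (mmul A (mexpt (t - c) A))) /\
  derivable_pt_lim (fun s => m22 (mexpt (s - c) A)) t (m22 (mmul A (mexpt (t - c) A))).
Proof.
  intros A c t.
  assert (Hs : derivable_pt_lim (fun s => s - c) t 1).
  { eapply dpl_ext; [| |apply (derivable_pt_lim_minus id (fct_cte c) t 1 0)].
    - intros; reflexivity. - ring. - apply derivable_pt_lim_id. - apply derivable_pt_lim_const. }
  destruct (mexpt_der A (t - c)) as [D1 [D2 [D3 D4]]].
  repeat split.
  - eapply dpl_ext; [| |exact (derivable_pt_lim_comp _ _ _ _ _ Hs D1)]; [intros; reflexivity|ring].
  - eapply dpl_ext; [| |exact (derivable_pt_lim_comp _ _ _ _ _ Hs D2)]; [intros; reflexivity|ring].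
  - eapply dpl_ext; [| |exact (derivable_pt_lim_comp _ _ _ _ _ Hs D3)]; [intros; reflexivity|ring].
  - eapply dpl_ext; [| |exact (derivable_pt_lim_comp _ _ _ _ _ Hs D4)]; [intros; reflexivity|ring].
Qed.

Lemma lin4 : forall (E : R -> Mat2) (D : Mat2) t k1 k2 k3 k4 k0,
  derivable_pt_lim (fun s => m11 (E s)) t (m11 D) ->
  derivable_pt_lim (fun s => m12 (E s)) t (m12 D) ->
  derivable_pt_lim (fun s => m21 (E s)) t (m21 D) ->
  derivable_pt_lim (fun s => m22 (E s)) t (m22 D) ->
  derivable_pt_lim (fun s => k1 * m11 (E s) + k2 * m12 (E s) + k3 * m21 (E s) + k4 * m22 (E s) + k0) t
    (k1 * m11 D + k2 * m12 D + k3 * m21 D + k4 * m22 D).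
Proof.
  intros E D t k1 k2 k3 k4 k0 H1 H2 H3 H4.
  pose proof (derivable_pt_lim_plus _ _ _ _ _
   (derivable_pt_lim_plus _ _ _ _ _
    (derivable_pt_lim_plus _ _ _ _ _
     (derivable_pt_lim_plus _ _ _ _ _
      (derivable_pt_lim_scal _ k1 _ _ H1) (derivable_pt_lim_scal _ k2 _ _ H2))
     (derivable_pt_lim_scal _ k3 _ _ H3)) (derivable_pt_lim_scal _ k4 _ _ H4))
   (derivable_pt_lim_const k0 t)) as H.
  eapply dpl_ext; [| |exact H].
  - intros s. unfold plus_fct, mult_real_fct, fct_cte. reflexivity.
  - ring.
Qed.

Lemma affv_der : forall A Ai b z c t,
  derivable_pt_lim (fun s => v1 (affv A Ai b z (s - c))) t
    (v1 (vadd (mvmul (mmul A (mexpt (t - c) A)) z) (mvmul Ai (mvmul (mmul A (mexpt (t - c) A)) b)))) /\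
  derivable_pt_lim (fun s => v2 (affv A Ai b z (s - c))) t
    (v2 (vadd (mvmul (mmul A (mexpt (t - c) A)) z) (mvmul Ai (mvmul (mmul A (mexpt (t - c) A)) b)))).
Proof.
  intros A Ai b z c t. destruct (dE_shift A c t) as [D1 [D2 [D3 D4]]]. split.
  - eapply dpl_ext; [| |apply (lin4 (fun s => mexpt (s - c) A) _ t
        (v1 z + m11 Ai * v1 b) (v2 z + m11 Ai * v2 b) (m12 Ai * v1 b) (m12 Ai * v2 b)
        (- (m11 Ai * v1 b + m12 Ai * v2 b)) D1 D2 D3 D4)].
    + intros s. unfold affv. simpl. ring.
    + simpl. ring.
  - eapply dpl_ext; [| |apply (lin4 (fun s => mexpt (s - c) A) _ t
        (m21 Ai * v1 b) (m21 Ai * v2 b) (v1 z + m22 Ai * v1 b) (v2 z + m22 Ai * v2 b)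
        (- (m21 Ai * v1 b + m22 Ai * v2 b)) D1 D2 D3 D4)].
    + intros s. unfold affv. simpl. ring.
    + simpl. ring.
Qed.

Lemma flow_der : forall A w c t,
  derivable_pt_lim (fun s => v1 (mvmul (mexpt (s - c) A) w)) t (v1 (mvmul (mmul A (mexpt (t - c) A)) w)) /\
  derivable_pt_lim (fun s => v2 (mvmul (mexpt (s - c) A) w)) t (v2 (mvmul (mmul A (mexpt (t - c) A)) w)).
Proof.
  intros A w c t. destruct (dE_shift A c t) as [D1 [D2 [D3 D4]]]. split.
  - eapply dpl_ext; [| |apply (lin4 (fun s => mexpt (s - c) A) _ t
        (v1 w) (v2 w) 0 0 0 D1 D2 D3 D4)].
    + intros s. simpl. ring.
    + simpl. ring.
  - eapply dpl_ext; [| |apply (lin4 (fun s => mexpt (s - c) A) _ t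
        0 0 (v1 w) (v2 w) 0 D1 D2 D3 D4)].
    + intros s. simpl. ring.
    + simpl. ring.
Qed.

Lemma flow_solves : forall a b A w c, solves_on a b A vzero (fun s => mvmul (mexpt (s - c) A) w).
Proof.
  intros a b A w c t Ht. destruct (flow_der A w c t) as [D1 D2].
  split; apply dpl_within.
  - eapply dpl_ext; [intros; reflexivity| |exact D1]. simpl. ring.
  - eapply dpl_ext; [intros; reflexivity| |exact D2]. simpl. ring.
Qed.

Lemma affv_solves : forall a b A Ai bb z c, mmul A Ai = mI -> mmul Ai A = mI ->
  solves_on a b A bb (fun s => affv A Ai bb z (s - c)).
Proof.
  intros a b A Ai bb z c HR HL t Ht. destruct (affv_der A Ai bb z c t) as [D1 D2].
  set (E := mexpt (t - c) A) in *.
  assert (Eq : vadd (mvmul (mmul A E) z) (mvmul Ai (mvmul (mmul A E) bb)) =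
               vadd (mvmul A (affv A Ai bb z (t - c))) bb).
  { unfold affv. fold E. rewrite !mv_assoc. rewrite <- (mv_assoc Ai A), HL, mv_I.
    rewrite mv_add, <- (mv_assoc A Ai), HR, mv_I, mv_msub, mv_I.
    apply Vec2_eq; simpl; ring. }
  rewrite Eq in D1, D2. split; apply dpl_within; assumption.
Qed.

Lemma affv_0 : forall A Ai b z, affv A Ai b z 0 = z.
Proof. intros. unfold affv. rewrite mexpt_0. apply Vec2_eq; simpl; ring. Qed.

Lemma flow_0 : forall A w, mvmul (mexpt 0 A) w = w.
Proof. intros. rewrite mexpt_0. apply mv_I. Qed.

Lemma flow_nonexp : forall p q k A w h, 0 < k -> dissip p q k A -> 0 <= h ->
  Vn p q (mvmul (mexpt h A) w) <= Vn p q w.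
Proof.
  intros p q k A w h Hk HA Hh.
  pose proof (energy_mono p q k A 0 h _ Hk HA (flow_solves 0 h A w 0) 0 h ltac:(lra) ltac:(lra) ltac:(lra)) as H.
  cbv beta in H. rewrite !Rminus_0_r in H. rewrite flow_0 in H. exact H.
Qed.


Lemma flow_strict : forall p q k A w h, 0 < p -> 0 < q -> 0 < k -> dissip p q k A ->
  m12 A <> 0 -> 0 < h -> w <> vzero -> Vn p q (mvmul (mexpt h A) w) < Vn p q w.
Proof.
  intros p q k A w h Hp Hq Hk HA H12 Hh Hw.
  set (z := fun s => mvmul (mexpt (s - 0) A) w).
  assert (Hz0 : z 0 = w) by (unfold z; rewrite Rminus_0_r; apply flow_0).
  assert (Hzh : z h = mvmul (mexpt h A) w) by (unfold z; rewrite Rminus_0_r; reflexivity).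
  rewrite <- Hzh. destruct (Rlt_or_le (Vn p q (z h)) (Vn p q w)) as [|Hge]; [assumption|exfalso].
  pose proof (energy_mono p q k A 0 h z Hk HA (flow_solves 0 h A w 0)) as Hm.
  assert (Hc : forall s, 0 <= s <= h -> Vn p q (z s) = Vn p q w).
  { intros s Hs. pose proof (Hm 0 s ltac:(lra) ltac:(lra) ltac:(lra)).
    pose proof (Hm s h ltac:(lra) ltac:(lra) ltac:(lra)). rewrite Hz0 in *. lra. }
  assert (Hz1 : forall t, 0 < t < h -> v1 (z t) = 0).
  { intros t Ht.
    destruct (flow_der A w 0 t) as [D1 D2].
    pose proof (dpl_quad p q _ _ t _ _ D1 D2) as DQ.
    assert (D0 : derivable_pt_lim (fun s => p * v1 (mvmul (mexpt (s - 0) A) w) ^ 2 +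
                    q * v2 (mvmul (mexpt (s - 0) A) w) ^ 2) t 0).
    { apply (loc_const_der _ (Vn p q w) t (Rmin t (h - t))).
      - apply Rmin_glb_lt; lra.
      - intros s Hs. pose proof (Rmin_l t (h - t)). pose proof (Rmin_r t (h - t)).
        apply Rabs_def2 in Hs. apply (Hc s). lra. }
    pose proof (uniqueness_limite _ _ _ _ DQ D0) as U.
    assert (Ueq : 2 * (p * v1 (z t) * (m11 A * v1 (z t) + m12 A * v2 (z t)) +
       q * v2 (z t) * (m21 A * v1 (z t) + m22 A * v2 (z t))) = 0).
    { rewrite <- U. unfold z. simpl. ring. }
    rewrite HA in Ueq.
    assert (Hx : v1 (z t) ^ 2 = 0).
    { apply (Rmult_eq_reg_l (-2 * k)); [|lra]. lra. }
    nra. }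
  destruct (flow_der A w 0 (h / 2)) as [D1 _].
  assert (D0 : derivable_pt_lim (fun s => v1 (mvmul (mexpt (s - 0) A) w)) (h / 2) 0).
  { apply (loc_const_der _ 0 (h / 2) (h / 2)); [lra|].
    intros s Hs. apply Rabs_def2 in Hs. apply (Hz1 s). lra. }
  pose proof (uniqueness_limite _ _ _ _ D1 D0) as U.
  assert (Hz1' := Hz1 (h / 2) ltac:(lra)).
  assert (Ueq : m11 A * v1 (z (h / 2)) + m12 A * v2 (z (h / 2)) = 0).
  { rewrite <- U. unfold z. simpl. ring. }
  rewrite Hz1' in Ueq.
  assert (Hz2 : v2 (z (h / 2)) = 0).
  { apply (Rmult_eq_reg_l (m12 A)); [|exact H12]. lra. }
  assert (Vn p q (z (h / 2)) = 0).
  { unfold Vn. rewrite Hz2, Hz1'. ring. }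
  rewrite Hc in H by lra. apply Hw. apply Vn_zero with p q; auto. lra.
Qed.

Lemma contract : forall p q P, 0 < p -> 0 < q ->
  (forall z, z <> vzero -> Vn p q (mvmul P z) < Vn p q z) ->
  exists rho, 0 <= rho < 1 /\ forall z, Vn p q (mvmul P z) <= rho * Vn p q z.
Proof.
  intros p q P Hp Hq Hs.
  set (al := p - (p * m11 P ^ 2 + q * m21 P ^ 2)).
  set (ga := q - (p * m12 P ^ 2 + q * m22 P ^ 2)).
  set (be := - (p * m11 P * m12 P + q * m21 P * m22 P)).
  assert (HQ : forall x y, Vn p q (mkV x y) - Vn p q (mvmul P (mkV x y)) =
     al * x ^ 2 + 2 * be * x * y + ga * y ^ 2).
  { intros. unfold Vn, al, be, ga. simpl. ring. }
  assert (Hal : 0 < al).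
  { assert (H := Hs (mkV 1 0) ltac:(intro E; injection E; lra)). pose proof (HQ 1 0). lra. }
  assert (Hga : 0 < ga).
  { assert (H := Hs (mkV 0 1) ltac:(intro E; injection E; lra)). pose proof (HQ 0 1). lra. }
  assert (HD : 0 < al * ga - be ^ 2).
  { assert (H := Hs (mkV be (- al)) ltac:(intro E; injection E; lra)). pose proof (HQ be (- al)).
    assert (0 < al * (al * ga - be ^ 2)) by nra.
    apply (Rmult_lt_reg_l al); lra. }
  set (mu := (al * ga - be ^ 2) / (al + ga)).
  assert (Hmu : 0 < mu) by (unfold mu; apply Rdiv_lt_0_compat; lra).
  assert (Hb : forall x y, mu * (x ^ 2 + y ^ 2) <= al * x ^ 2 + 2 * be * x * y + ga * y ^ 2).
  { intros x y.
    assert (Id : (al + ga) * (al * x ^ 2 + 2 * be * x * y + ga * y ^ 2) - (al * ga - be ^ 2) * (x ^ 2 + y ^ 2)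
      = (al * x + be * y) ^ 2 + (be * x + ga * y) ^ 2) by ring.
    assert (0 <= (al * x + be * y) ^ 2 + (be * x + ga * y) ^ 2).
    { pose proof (pow2_ge_0 (al * x + be * y)). pose proof (pow2_ge_0 (be * x + ga * y)). lra. }
    unfold mu. apply (Rmult_le_reg_l (al + ga)); [lra|].
    replace ((al + ga) * ((al * ga - be ^ 2) / (al + ga) * (x ^ 2 + y ^ 2))) with
      ((al * ga - be ^ 2) * (x ^ 2 + y ^ 2)) by (field; lra). lra. }
  set (rho := 1 - mu / (p + q)).
  assert (Hmain : forall z, Vn p q (mvmul P z) <= rho * Vn p q z).
  { intros [x y]. pose proof (HQ x y). pose proof (Hb x y).
    assert (HV : Vn p q (mkV x y) <= (p + q) * (x ^ 2 + y ^ 2)).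
    { unfold Vn; simpl. pose proof (pow2_ge_0 x). pose proof (pow2_ge_0 y). nra. }
    assert (mu / (p + q) * Vn p q (mkV x y) <= mu * (x ^ 2 + y ^ 2)).
    { apply (Rmult_le_reg_l (p + q)); [lra|].
      replace ((p + q) * (mu / (p + q) * Vn p q (mkV x y))) with (mu * Vn p q (mkV x y)) by (field; lra).
      replace ((p + q) * (mu * (x ^ 2 + y ^ 2))) with (mu * ((p + q) * (x ^ 2 + y ^ 2))) by ring.
      apply Rmult_le_compat_l; lra. }
    unfold rho. lra. }
  exists rho. split; [split|exact Hmain].
  - pose proof (Hmain (mkV 1 0)). pose proof (Vn_nonneg p q (mvmul P (mkV 1 0)) Hp Hq).
    unfold Vn at 2 in H. simpl in H. nra.
  - unfold rho. assert (0 < mu / (p + q)) by (apply Rdiv_lt_0_compat; lra). lra.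
Qed.

Definition kf (T t : R) : nat := Z.to_nat (up (t / T) - 1).

Lemma kf_spec : forall T t n, 0 < T -> INR n * T <= t < INR n * T + T -> kf T t = n.
Proof.
  intros T t n HT [H1 H2]. unfold kf.
  assert (Hq : t / T * T = t) by (field; lra).
  assert (E : up (t / T) = (Z.of_nat n + 1)%Z).
  { symmetry. apply tech_up; rewrite plus_IZR, <- INR_IZR_INZ; simpl.
    - apply (Rmult_lt_reg_r T); [lra|]. rewrite Hq. lra.
    - apply (Rmult_le_reg_r T); [lra|]. rewrite !Rmult_plus_distr_r, Hq. lra. }
  rewrite E. replace (Z.of_nat n + 1 - 1)%Z with (Z.of_nat n) by ring. apply Nat2Z.id.
Qed.

Lemma kf_bounds : forall T t, 0 < T -> 0 <= t ->
  INR (kf T t) * T <= t < INR (kf T t) * T + T.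
Proof.
  intros T t HT Ht. unfold kf.
  destruct (archimed (t / T)) as [A1 A2].
  assert (Hq : t / T * T = t) by (field; lra).
  assert (Htt : 0 <= t / T) by (apply Rmult_le_pos; [lra|left; apply Rinv_0_lt_compat; lra]).
  assert (Hz : (0 < up (t / T))%Z) by (apply lt_0_IZR; lra).
  rewrite INR_IZR_INZ, Z2Nat.id by lia. rewrite minus_IZR. simpl.
  split.
  - apply (Rmult_le_reg_r (/ T)); [apply Rinv_0_lt_compat; lra|].
    replace ((IZR (up (t / T)) - 1) * T * / T) with (IZR (up (t / T)) - 1) by (field; lra).
    unfold Rdiv in *. lra.
  - apply (Rmult_lt_reg_r (/ T)); [apply Rinv_0_lt_compat; lra|].
    replace (((IZR (up (t / T)) - 1) * T + T) * / T) with (IZR (up (t / T))) by (field; lra).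
    unfold Rdiv in *. lra.
Qed.


Definition G1 Rr L C Vdc (z : Vec2) (u : R) : Vec2 :=
  affv (Amat1 Rr L C) (minv (Amat1 Rr L C)) (b1 L Vdc) z u.
Definition G2 Rr L C (w : Vec2) (u : R) : Vec2 := mvmul (mexpt u (Amat2 Rr L C)) w.
Definition Fm Rr L C Vdc T (z : Vec2) : Vec2 := G2 Rr L C (G1 Rr L C Vdc z (T / 2)) (T / 2).
Fixpoint xs Rr L C Vdc T (x0 : Vec2) (k : nat) : Vec2 :=
  match k with O => x0 | S k' => Fm Rr L C Vdc T (xs Rr L C Vdc T x0 k') end.
Definition solu Rr L C Vdc T (z : Vec2) (u : R) : Vec2 :=
  if Rle_dec u (T / 2) then G1 Rr L C Vdc z u
  else G2 Rr L C (G1 Rr L C Vdc z (T / 2)) (u - T / 2).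
Definition sol Rr L C Vdc T (x0 : Vec2) (t : R) : Vec2 :=
  solu Rr L C Vdc T (xs Rr L C Vdc T x0 (kf T t)) (t - INR (kf T t) * T).

Lemma G1_0 : forall Rr L C Vdc z, G1 Rr L C Vdc z 0 = z.
Proof. intros. unfold G1. apply affv_0. Qed.
Lemma G2_0 : forall Rr L C w, G2 Rr L C w 0 = w.
Proof. intros. unfold G2. apply flow_0. Qed.

Lemma piece1 : forall Rr L C Vdc T x0 m t, 0 < T ->
  INR m * T <= t <= INR m * T + T / 2 ->
  sol Rr L C Vdc T x0 t = G1 Rr L C Vdc (xs Rr L C Vdc T x0 m) (t - INR m * T).
Proof.
  intros Rr L C Vdc T x0 m t HT Ht. unfold sol. rewrite (kf_spec T t m) by lra.
  unfold solu. destruct Rle_dec; [reflexivity|lra].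
Qed.

Lemma piece2 : forall Rr L C Vdc T x0 m t, 0 < T ->
  INR m * T + T / 2 <= t <= INR m * T + T ->
  sol Rr L C Vdc T x0 t =
  G2 Rr L C (G1 Rr L C Vdc (xs Rr L C Vdc T x0 m) (T / 2)) (t - (INR m * T + T / 2)).
Proof.
  intros Rr L C Vdc T x0 m t HT Ht. unfold sol.
  destruct (Rlt_or_le t (INR m * T + T)) as [Hlt|Hge].
  - rewrite (kf_spec T t m) by lra. unfold solu. destruct Rle_dec as [Hle|Hnle].
    + replace (t - (INR m * T + T / 2)) with 0 by lra. rewrite G2_0.
      replace (t - INR m * T) with (T / 2) by lra. reflexivity.
    + replace (t - INR m * T - T / 2) with (t - (INR m * T + T / 2)) by ring. reflexivity.
  - rewrite (kf_spec T t (S m)) by (try rewrite S_INR; lra).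
    unfold solu. replace (t - INR (S m) * T) with 0 by (rewrite S_INR; lra).
    destruct Rle_dec; [|lra]. rewrite G1_0. simpl xs. unfold Fm.
    replace (t - (INR m * T + T / 2)) with (T / 2) by lra. reflexivity.
Qed.

Lemma A1_inv : forall Rr L C, 0 < L -> 0 < C ->
  mmul (Amat1 Rr L C) (minv (Amat1 Rr L C)) = mI /\ mmul (minv (Amat1 Rr L C)) (Amat1 Rr L C) = mI.
Proof.
  intros Rr L C HL HC. unfold minv, mdet, Amat1.
  split; apply Mat2_eq; simpl; field; split; try lra; intro E; field_simplify in E; try lra;
    apply Rmult_integral in E; lra.
Qed.

Lemma dissip1 : forall Rr L C, 0 < L -> 0 < C -> dissip L C Rr (Amat1 Rr L C).
Proof. intros Rr L C HL HC x y. unfold Amat1; simpl. field. lra. Qed.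
Lemma dissip2 : forall Rr L C, 0 < L -> 0 < C -> dissip L C Rr (Amat2 Rr L C).
Proof. intros Rr L C HL HC x y. unfold Amat2; simpl. field. lra. Qed.

Lemma solves_ext : forall a b A c x y, (forall s, a <= s <= b -> x s = y s) ->
  solves_on a b A c y -> solves_on a b A c x.
Proof.
  intros a b A c x y He Hy t Ht. destruct (Hy t Ht) as [D1 D2]. rewrite (He t Ht).
  split; eapply dw_ext; try eassumption; intros s Hs; cbv beta; rewrite (He s Hs); reflexivity.
Qed.

Lemma p1_solves : forall Rr L C Vdc z c a b, 0 < L -> 0 < C ->
  solves_on a b (Amat1 Rr L C) (b1 L Vdc) (fun t => G1 Rr L C Vdc z (t - c)).
Proof.
  intros. destruct (A1_inv Rr L C) as [HR HL]; auto. unfold G1. apply affv_solves; auto.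
Qed.

Lemma p2_solves : forall Rr L C w c a b,
  solves_on a b (Amat2 Rr L C) vzero (fun t => G2 Rr L C w (t - c)).
Proof. intros. unfold G2. apply flow_solves. Qed.

Definition vcont (g : R -> Vec2) (t : R) : Prop :=
  continuity_pt (fun s => v1 (g s)) t /\ continuity_pt (fun s => v2 (g s)) t.

Lemma p1_cont : forall Rr L C Vdc z c t, vcont (fun s => G1 Rr L C Vdc z (s - c)) t.
Proof.
  intros. unfold G1. destruct (affv_der (Amat1 Rr L C) (minv (Amat1 Rr L C)) (b1 L Vdc) z c t) as [D1 D2].
  split; apply derivable_continuous_pt; eexists; eassumption.
Qed.

Lemma p2_cont : forall Rr L C w c t, vcont (fun s => G2 Rr L C w (s - c)) t.
Proof.
  intros. unfold G2. destruct (flow_der (Amat2 Rr L C) w c t) as [D1 D2].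
  split; apply derivable_continuous_pt; eexists; eassumption.
Qed.

Lemma glue : forall (f g1 g2 : R -> R) t hl hr, 0 < hl -> 0 < hr ->
  (forall s, t - hl <= s <= t -> 0 <= s -> f s = g1 s) ->
  (forall s, t <= s <= t + hr -> f s = g2 s) ->
  continuity_pt g1 t -> continuity_pt g2 t -> 0 <= t ->
  limit1_in f (fun s => 0 <= s) (f t) t.
Proof.
  intros f g1 g2 t hl hr Hl Hr E1 E2 C1 C2 Ht eps Heps.
  destruct (C1 eps Heps) as [a1 [Ha1 Q1]]. destruct (C2 eps Heps) as [a2 [Ha2 Q2]].
  exists (Rmin (Rmin a1 a2) (Rmin hl hr)). split.
  { repeat apply Rmin_glb_lt; lra. }
  pose proof (Rmin_l (Rmin a1 a2) (Rmin hl hr)). pose proof (Rmin_r (Rmin a1 a2) (Rmin hl hr)).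
  pose proof (Rmin_l a1 a2). pose proof (Rmin_r a1 a2). pose proof (Rmin_l hl hr). pose proof (Rmin_r hl hr).
  intros s [Hs Hd]. simpl in Hd |- *. unfold Rdist in *. apply Rabs_def2 in Hd.
  destruct (Req_dec s t) as [Est|Nst].
  { rewrite Est. replace (f t - f t) with 0 by ring. rewrite Rabs_R0. lra. }
  destruct (Rle_or_lt s t).
  - rewrite (E1 s) by lra. rewrite (E1 t) by lra.
    apply (Q1 s). split; [split; [exact I|auto]|]. simpl. unfold Rdist. apply Rabs_def1; lra.
  - rewrite (E2 s) by lra. rewrite (E2 t) by lra.
    apply (Q2 s). split; [split; [exact I|auto]|]. simpl. unfold Rdist. apply Rabs_def1; lra.
Qed.

Lemma sol_left : forall Rr L C Vdc T x0 t, 0 < T -> 0 <= t ->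
  exists hl g, 0 < hl /\ (forall s, t - hl <= s <= t -> 0 <= s -> sol Rr L C Vdc T x0 s = g s) /\ vcont g t.
Proof.
  intros Rr L C Vdc T x0 t HT Ht.
  pose proof (kf_bounds T t HT Ht) as Hb. set (m := kf T t) in Hb.
  destruct (Rlt_or_le (INR m * T + T / 2) t) as [H2|H2].
  - exists (t - (INR m * T + T / 2)).
    exists (fun s => G2 Rr L C (G1 Rr L C Vdc (xs Rr L C Vdc T x0 m) (T / 2)) (s - (INR m * T + T / 2))).
    split; [lra|split; [|apply p2_cont]]. intros s Hs _. apply piece2; lra.
  - destruct (Rlt_or_le (INR m * T) t) as [H3|H3].
    + exists (t - INR m * T). exists (fun s => G1 Rr L C Vdc (xs Rr L C Vdc T x0 m) (s - INR m * T)).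
      split; [lra|split; [|apply p1_cont]]. intros s Hs _. apply piece1; lra.
    + destruct m as [|m'].
      * exists 1. exists (fun s => G1 Rr L C Vdc (xs Rr L C Vdc T x0 0) (s - INR 0 * T)).
        split; [lra|split; [|apply p1_cont]]. intros s Hs Hs0. simpl in Hb. apply piece1; simpl in *; try lra.
      * rewrite S_INR in Hb, H2, H3. exists (T / 2).
        exists (fun s => G2 Rr L C (G1 Rr L C Vdc (xs Rr L C Vdc T x0 m') (T / 2)) (s - (INR m' * T + T / 2))).
        split; [lra|split; [|apply p2_cont]]. intros s Hs _. apply piece2; lra.
Qed.

Lemma sol_right : forall Rr L C Vdc T x0 t, 0 < T -> 0 <= t ->
  exists hr g, 0 < hr /\ (forall s, t <= s <= t + hr -> sol Rr L C Vdc T x0 s = g s) /\ vcont g t.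
Proof.
  intros Rr L C Vdc T x0 t HT Ht.
  pose proof (kf_bounds T t HT Ht) as Hb. set (m := kf T t) in Hb.
  destruct (Rlt_or_le t (INR m * T + T / 2)) as [H2|H2].
  - exists (INR m * T + T / 2 - t). exists (fun s => G1 Rr L C Vdc (xs Rr L C Vdc T x0 m) (s - INR m * T)).
    split; [lra|split; [|apply p1_cont]]. intros s Hs. apply piece1; lra.
  - exists (INR m * T + T - t).
    exists (fun s => G2 Rr L C (G1 Rr L C Vdc (xs Rr L C Vdc T x0 m) (T / 2)) (s - (INR m * T + T / 2))).
    split; [lra|split; [|apply p2_cont]]. intros s Hs. apply piece2; lra.
Qed.

Lemma sol_is_solution : forall Rr L C Vdc T x0, 0 < L -> 0 < C -> 0 < T ->
  is_solution Rr L C Vdc T (sol Rr L C Vdc T x0).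
Proof.
  intros Rr L C Vdc T x0 HL HC HT. split.
  - intros t Ht.
    destruct (sol_left Rr L C Vdc T x0 t HT Ht) as [hl [g1 [Hl [E1 [C11 C12]]]]].
    destruct (sol_right Rr L C Vdc T x0 t HT Ht) as [hr [g2 [Hr [E2 [C21 C22]]]]].
    split.
    + apply (glue (fun s => v1 (sol Rr L C Vdc T x0 s)) (fun s => v1 (g1 s)) (fun s => v1 (g2 s)) t hl hr Hl Hr); auto.
      * intros s Hs Hs0. cbv beta. rewrite (E1 s Hs Hs0). reflexivity.
      * intros s Hs. cbv beta. rewrite (E2 s Hs). reflexivity.
    + apply (glue (fun s => v2 (sol Rr L C Vdc T x0 s)) (fun s => v2 (g1 s)) (fun s => v2 (g2 s)) t hl hr Hl Hr); auto.
      * intros s Hs Hs0. cbv beta. rewrite (E1 s Hs Hs0). reflexivity.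
      * intros s Hs. cbv beta. rewrite (E2 s Hs). reflexivity.
  - intros k Hk. destruct k as [|m]; [lia|].
    replace (S m - 1)%nat with m by lia. rewrite S_INR.
    replace ((INR m + 1) * T) with (INR m * T + T) by ring. split.
    + eapply solves_ext; [|apply (p1_solves Rr L C Vdc (xs Rr L C Vdc T x0 m) (INR m * T)); auto].
      intros s Hs. apply piece1; lra.
    + eapply solves_ext; [|apply (p2_solves Rr L C (G1 Rr L C Vdc (xs Rr L C Vdc T x0 m) (T / 2)) (INR m * T + T / 2))].
      intros s Hs. apply piece2; lra.
Qed.

Lemma agree : forall Rr L C Vdc T y m, 0 < Rr -> 0 < L -> 0 < C -> 0 < T ->
  is_solution Rr L C Vdc T y -> y (INR m * T) = xs Rr L C Vdc T (y 0) m ->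
  (forall t, INR m * T <= t <= INR m * T + T / 2 ->
     y t = G1 Rr L C Vdc (xs Rr L C Vdc T (y 0) m) (t - INR m * T)) /\
  (forall t, INR m * T + T / 2 <= t <= INR m * T + T ->
     y t = G2 Rr L C (G1 Rr L C Vdc (xs Rr L C Vdc T (y 0) m) (T / 2)) (t - (INR m * T + T / 2))).
Proof.
  intros Rr L C Vdc T y m HR HL HC HT [_ Hs] Hy0.
  destruct (Hs (S m) ltac:(lia)) as [S1 S2].
  replace (S m - 1)%nat with m in S1, S2 by lia. rewrite S_INR in S2.
  replace ((INR m + 1) * T) with (INR m * T + T) in S2 by ring.
  assert (P1 : forall t, INR m * T <= t <= INR m * T + T / 2 ->
     y t = G1 Rr L C Vdc (xs Rr L C Vdc T (y 0) m) (t - INR m * T)).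
  { intros t Ht.
    apply (uniq_on L C Rr (Amat1 Rr L C) _ _ (b1 L Vdc) y
      (fun t => G1 Rr L C Vdc (xs Rr L C Vdc T (y 0) m) (t - INR m * T)) HL HC HR (dissip1 Rr L C HL HC) S1
      (p1_solves Rr L C Vdc _ _ _ _ HL HC)); [|exact Ht].
    cbv beta. rewrite Rminus_diag, G1_0. exact Hy0. }
  split; [exact P1|].
  intros t Ht.
  apply (uniq_on L C Rr (Amat2 Rr L C) _ _ vzero y
    (fun t => G2 Rr L C (G1 Rr L C Vdc (xs Rr L C Vdc T (y 0) m) (T / 2)) (t - (INR m * T + T / 2)))
    HL HC HR (dissip2 Rr L C HL HC) S2 (p2_solves Rr L C _ _ _ _)); [|exact Ht].
  cbv beta. rewrite Rminus_diag, G2_0. rewrite P1 by lra.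
  replace (INR m * T + T / 2 - INR m * T) with (T / 2) by ring. reflexivity.
Qed.

Lemma y_xs : forall Rr L C Vdc T y, 0 < Rr -> 0 < L -> 0 < C -> 0 < T ->
  is_solution Rr L C Vdc T y -> forall m, y (INR m * T) = xs Rr L C Vdc T (y 0) m.
Proof.
  intros Rr L C Vdc T y HR HL HC HT Hy m. induction m.
  - simpl. rewrite Rmult_0_l. reflexivity.
  - destruct (agree Rr L C Vdc T y m HR HL HC HT Hy IHm) as [_ P2].
    rewrite S_INR. replace ((INR m + 1) * T) with (INR m * T + T) by ring.
    rewrite P2 by lra. simpl xs. unfold Fm.
    replace (INR m * T + T - (INR m * T + T / 2)) with (T / 2) by field. reflexivity.
Qed.

Lemma sol_unique : forall Rr L C Vdc T y, 0 < Rr -> 0 < L -> 0 < C -> 0 < T ->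
  is_solution Rr L C Vdc T y -> forall t, 0 <= t -> y t = sol Rr L C Vdc T (y 0) t.
Proof.
  intros Rr L C Vdc T y HR HL HC HT Hy t Ht.
  pose proof (kf_bounds T t HT Ht) as Hb. set (m := kf T t) in Hb.
  destruct (agree Rr L C Vdc T y m HR HL HC HT Hy (y_xs Rr L C Vdc T y HR HL HC HT Hy m)) as [P1 P2].
  destruct (Rle_or_lt t (INR m * T + T / 2)).
  - rewrite P1 by lra. rewrite (piece1 _ _ _ _ _ _ m) by lra. reflexivity.
  - rewrite P2 by lra. rewrite (piece2 _ _ _ _ _ _ m) by lra. reflexivity.
Qed.

Definition Pm Rr L C T : Mat2 := mmul (mexpt (T / 2) (Amat2 Rr L C)) (mexpt (T / 2) (Amat1 Rr L C)).
Definition w0 Rr L C Vdc T : Vec2 :=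
  mvmul (mexpt (T / 2) (Amat2 Rr L C)) (mvmul (minv (Amat1 Rr L C))
    (mvmul (msub (mexpt (T / 2) (Amat1 Rr L C)) mI) (b1 L Vdc))).

Lemma Fm_affine : forall Rr L C Vdc T z,
  Fm Rr L C Vdc T z = vadd (mvmul (Pm Rr L C T) z) (w0 Rr L C Vdc T).
Proof. intros. unfold Fm, G2, G1, affv, Pm, w0. apply Vec2_eq; simpl; ring. Qed.

Lemma P_strict : forall Rr L C T z, 0 < Rr -> 0 < L -> 0 < C -> 0 < T -> z <> vzero ->
  Vn L C (mvmul (Pm Rr L C T) z) < Vn L C z.
Proof.
  intros Rr L C T z HR HL HC HT Hz. unfold Pm. rewrite mv_assoc.
  eapply Rle_lt_trans.
  - apply (flow_nonexp L C Rr (Amat2 Rr L C)); auto. apply dissip2; auto. lra.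
  - apply (flow_strict L C Rr (Amat1 Rr L C)); auto. apply dissip1; auto.
    unfold Amat1; simpl. apply Ropp_neq_0_compat. apply Rinv_neq_0_compat. lra. lra.
Qed.

Lemma det_nonzero : forall M, (forall z, mvmul M z = vzero -> z = vzero) -> mdet M <> 0.
Proof.
  intros [a b c d] H Hd. unfold mdet in Hd; simpl in Hd.
  assert (H1 := H (mkV d (- c))). assert (H2 := H (mkV b (- a))).
  assert (E1 : mvmul (mkM a b c d) (mkV d (- c)) = vzero) by (apply Vec2_eq; simpl; lra).
  assert (E2 : mvmul (mkM a b c d) (mkV b (- a)) = vzero) by (apply Vec2_eq; simpl; lra).
  specialize (H1 E1). specialize (H2 E2). injection H1; injection H2; intros.
  assert (E3 : mvmul (mkM a b c d) (mkV 1 0) = vzero) by (apply Vec2_eq; simpl; lra).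
  specialize (H _ E3). injection H. lra.
Qed.

Lemma minv_ok : forall M, mdet M <> 0 -> mmul M (minv M) = mI /\ mmul (minv M) M = mI.
Proof.
  intros [a b c d] H. unfold mdet in H; simpl in H. unfold minv, mdet; simpl.
  split; apply Mat2_eq; simpl; field; exact H.
Qed.

Lemma xs_contract : forall Rr L C Vdc T rho x0 y0,
  (forall z, Vn L C (mvmul (Pm Rr L C T) z) <= rho * Vn L C z) -> 0 <= rho ->
  forall m, Vn L C (vsub (xs Rr L C Vdc T x0 m) (xs Rr L C Vdc T y0 m)) <= rho ^ m * Vn L C (vsub x0 y0).
Proof.
  intros Rr L C Vdc T rho x0 y0 Hc Hr m. induction m.
  - simpl. lra.
  - simpl xs. rewrite !Fm_affine.
    replace (vsub (vadd (mvmul (Pm Rr L C T) (xs Rr L C Vdc T x0 m)) (w0 Rr L C Vdc T))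
                  (vadd (mvmul (Pm Rr L C T) (xs Rr L C Vdc T y0 m)) (w0 Rr L C Vdc T)))
      with (mvmul (Pm Rr L C T) (vsub (xs Rr L C Vdc T x0 m) (xs Rr L C Vdc T y0 m)))
      by (apply Vec2_eq; simpl; ring).
    eapply Rle_trans; [apply Hc|]. simpl. rewrite Rmult_assoc.
    apply Rmult_le_compat_l; assumption.
Qed.

Lemma sol_contract : forall Rr L C Vdc T rho x0 y0 t, 0 < Rr -> 0 < L -> 0 < C -> 0 < T -> 0 <= t ->
  (forall z, Vn L C (mvmul (Pm Rr L C T) z) <= rho * Vn L C z) -> 0 <= rho ->
  Vn L C (vsub (sol Rr L C Vdc T x0 t) (sol Rr L C Vdc T y0 t)) <= rho ^ (kf T t) * Vn L C (vsub x0 y0).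
Proof.
  intros Rr L C Vdc T rho x0 y0 t HR HL HC HT Ht Hc Hr.
  pose proof (kf_bounds T t HT Ht) as Hb. set (m := kf T t) in *.
  pose proof (xs_contract Rr L C Vdc T rho x0 y0 Hc Hr m) as Hx.
  set (a := xs Rr L C Vdc T x0 m) in *. set (b := xs Rr L C Vdc T y0 m) in *.
  eapply Rle_trans; [|exact Hx].
  destruct (Rle_or_lt t (INR m * T + T / 2)).
  - rewrite !(piece1 _ _ _ _ _ _ m) by lra. fold a b.
    replace (vsub (G1 Rr L C Vdc a (t - INR m * T)) (G1 Rr L C Vdc b (t - INR m * T)))
      with (mvmul (mexpt (t - INR m * T) (Amat1 Rr L C)) (vsub a b))
      by (unfold G1, affv; apply Vec2_eq; simpl; ring).
    apply (flow_nonexp L C Rr); auto. apply dissip1; auto. lra.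
  - rewrite !(piece2 _ _ _ _ _ _ m) by lra. fold a b.
    replace (vsub (G2 Rr L C (G1 Rr L C Vdc a (T / 2)) (t - (INR m * T + T / 2)))
                  (G2 Rr L C (G1 Rr L C Vdc b (T / 2)) (t - (INR m * T + T / 2))))
      with (mvmul (mexpt (t - (INR m * T + T / 2)) (Amat2 Rr L C))
              (mvmul (mexpt (T / 2) (Amat1 Rr L C)) (vsub a b)))
      by (unfold G1, G2, affv; apply Vec2_eq; simpl; ring).
    eapply Rle_trans.
    + apply (flow_nonexp L C Rr); auto. apply dissip2; auto. lra.
    + apply (flow_nonexp L C Rr); auto. apply dissip1; auto. lra.
Qed.

Theorem theorem1 (Rr L C Vdc T : R)
  (hR : 0 < Rr) (hL : 0 < L) (hC : 0 < C) (hV : 0 < Vdc) (hT : 0 < T) :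
  let M := msub mI (mmul (mexpt (T / 2) (Amat2 Rr L C)) (mexpt (T / 2) (Amat1 Rr L C))) in
  let xp0 := mvmul (minv M)
               (mvmul (mexpt (T / 2) (Amat2 Rr L C))
                 (mvmul (minv (Amat1 Rr L C))
                   (mvmul (msub (mexpt (T / 2) (Amat1 Rr L C)) mI) (b1 L Vdc)))) in
  minvertible M /\
  exists xp : R -> Vec2,
    is_solution Rr L C Vdc T xp /\ T_periodic T xp /\
    (forall y : R -> Vec2, is_solution Rr L C Vdc T y -> T_periodic T y ->
       forall t, 0 <= t -> y t = xp t) /\
    xp 0 = xp0 /\
    (forall t, 0 <= t <= T / 2 ->
       xp t = vadd (mvmul (mexpt t (Amat1 Rr L C)) (xp 0))
                   (mvmul (minv (Amat1 Rr L C))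
                      (mvmul (msub (mexpt t (Amat1 Rr L C)) mI) (b1 L Vdc)))) /\
    (forall t, T / 2 < t <= T ->
       xp t = mvmul (mexpt (t - T / 2) (Amat2 Rr L C)) (xp (T / 2))) /\
    (forall x0 : Vec2,
       (exists x : R -> Vec2, is_solution Rr L C Vdc T x /\ x 0 = x0) /\
       (forall x : R -> Vec2, is_solution Rr L C Vdc T x -> x 0 = x0 ->
          forall eps, 0 < eps -> exists t0, forall t, t0 <= t ->
            vnorm (vsub (x t) (xp t)) < eps)).
Proof.
  intros M xp0.
  assert (HM : M = msub mI (Pm Rr L C T)) by reflexivity.
  assert (Hxp0 : xp0 = mvmul (minv M) (w0 Rr L C Vdc T)) by reflexivity.
  clearbody M xp0.
  destruct (contract L C (Pm Rr L C T) hL hC (fun z Hz => P_strict Rr L C T z hR hL hC hT Hz))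
    as [rho [[Hr0 Hr1] Hrho]].
  assert (Hinj : forall z, mvmul M z = vzero -> z = vzero).
  { intros z Hz. rewrite HM, mv_msub, mv_I in Hz.
    assert (Pz : mvmul (Pm Rr L C T) z = z).
    { apply Vec2_eq; [assert (H := f_equal v1 Hz)|assert (H := f_equal v2 Hz)]; simpl in H |- *; lra. }
    pose proof (Hrho z) as H. rewrite Pz in H. pose proof (Vn_nonneg L C z hL hC).
    apply (Vn_zero L C); auto. nra. }
  destruct (minv_ok M (det_nonzero M Hinj)) as [HMR HML].
  assert (HMw : forall z, Fm Rr L C Vdc T z = z <-> mvmul M z = w0 Rr L C Vdc T).
  { intros z. rewrite Fm_affine, HM, mv_msub, mv_I. split; intro H.
    - rewrite <- H at 1. apply Vec2_eq; simpl; ring.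
    - rewrite <- H. apply Vec2_eq; simpl; ring. }
  assert (Hfix : Fm Rr L C Vdc T xp0 = xp0).
  { apply HMw. rewrite Hxp0, <- mv_assoc, HMR, mv_I. reflexivity. }
  assert (Hxs : forall m, xs Rr L C Vdc T xp0 m = xp0).
  { induction m; simpl; [reflexivity|]. rewrite IHm. exact Hfix. }
  assert (Hsol0 : forall x0, sol Rr L C Vdc T x0 0 = x0).
  { intros x0. rewrite (piece1 _ _ _ _ _ _ 0) by (simpl; lra). simpl xs.
    replace (0 - INR 0 * T) with 0 by (simpl; ring). apply G1_0. }
  split.
  { exists (minv M). split; assumption. }
  exists (sol Rr L C Vdc T xp0).
  split; [apply sol_is_solution; auto|].
  split.
  { intros t Ht. pose proof (kf_bounds T t hT Ht) as Hb. unfold sol.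
    set (m := kf T t) in *.
    rewrite (kf_spec T (t + T) (S m)) by (try rewrite S_INR; lra).
    rewrite !Hxs. replace (t + T - INR (S m) * T) with (t - INR m * T) by (rewrite S_INR; ring).
    reflexivity. }
  split.
  { intros y Hy Hper t Ht.
    assert (Hy0 : y 0 = xp0).
    { assert (E : y T = y 0) by (rewrite <- (Hper 0 ltac:(lra)); f_equal; ring).
      rewrite (sol_unique Rr L C Vdc T y hR hL hC hT Hy T ltac:(lra)) in E.
      rewrite (piece2 _ _ _ _ _ _ 0) in E by (simpl; lra). simpl xs in E.
      replace (T - (INR 0 * T + T / 2)) with (T / 2) in E by (simpl; field).
      change (Fm Rr L C Vdc T (y 0) = y 0) in E. apply HMw in E.
      rewrite Hxp0, <- E, <- mv_assoc, HML, mv_I. reflexivity. }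
    rewrite (sol_unique Rr L C Vdc T y hR hL hC hT Hy t Ht), Hy0. reflexivity. }
  split; [apply Hsol0|].
  split.
  { intros t Ht. rewrite Hsol0. rewrite (piece1 _ _ _ _ _ _ 0) by (simpl; lra). simpl xs.
    replace (t - INR 0 * T) with t by (simpl; ring). reflexivity. }
  split.
  { intros t Ht. rewrite (piece2 _ _ _ _ _ _ 0) by (simpl; lra).
    rewrite (piece1 _ _ _ _ _ _ 0 (T / 2)) by (simpl; lra). simpl xs.
    replace (t - (INR 0 * T + T / 2)) with (t - T / 2) by (simpl; ring).
    replace (T / 2 - INR 0 * T) with (T / 2) by (simpl; ring). reflexivity. }
  intros x0. split.
  { exists (sol Rr L C Vdc T x0). split; [apply sol_is_solution; auto|apply Hsol0]. }
  intros x Hx Hx0 eps Heps.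
  set (K0 := Vn L C (vsub x0 xp0)).
  assert (HK0 : 0 <= K0) by (apply Vn_nonneg; auto).
  set (mL := Rmin L C).
  assert (HmL : 0 < mL) by (unfold mL; apply Rmin_glb_lt; lra).
  assert (Habs : Rabs rho < 1) by (rewrite Rabs_right; lra).
  destruct (pow_lt_1_zero rho Habs (eps ^ 2 * mL / (K0 + 1))) as [N HN].
  { apply Rdiv_lt_0_compat; [|lra]. apply Rmult_lt_0_compat; [|lra]. nra. }
  exists (INR N * T). intros t Ht.
  assert (HN0 : 0 <= INR N) by apply pos_INR.
  assert (Ht0 : 0 <= t) by nra.
  pose proof (kf_bounds T t hT Ht0) as Hb. set (m := kf T t) in *.
  assert (Hm : (N <= m)%nat).
  { assert (INR N < INR (S m)) by (rewrite S_INR; nra). apply INR_lt in H. lia. }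
  specialize (HN m Hm).
  pose proof (sol_contract Rr L C Vdc T rho x0 xp0 t hR hL hC hT Ht0 Hrho Hr0) as Hc.
  fold m in Hc. fold K0 in Hc.
  rewrite (sol_unique Rr L C Vdc T x hR hL hC hT Hx t Ht0), Hx0.
  set (d := vsub (sol Rr L C Vdc T x0 t) (sol Rr L C Vdc T xp0 t)) in *.
  assert (Hpm : 0 <= rho ^ m) by (apply pow_le; lra).
  rewrite Rabs_right in HN by lra.
  assert (Hd : mL * (v1 d ^ 2 + v2 d ^ 2) <= Vn L C d).
  { unfold Vn, mL. pose proof (Rmin_l L C). pose proof (Rmin_r L C).
    pose proof (pow2_ge_0 (v1 d)). pose proof (pow2_ge_0 (v2 d)). nra. }
  assert (H1 : rho ^ m * K0 <= eps ^ 2 * mL / (K0 + 1) * K0) by (apply Rmult_le_compat_r; lra).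
  assert (H2 : eps ^ 2 * mL / (K0 + 1) * K0 < eps ^ 2 * mL).
  { assert (0 < eps ^ 2 * mL) by (apply Rmult_lt_0_compat; nra).
    replace (eps ^ 2 * mL / (K0 + 1) * K0) with (eps ^ 2 * mL * (K0 / (K0 + 1))) by (field; lra).
    assert (K0 / (K0 + 1) < 1) by (apply (Rmult_lt_reg_r (K0 + 1)); [lra|]; field_simplify; lra).
    nra. }
  assert (Hsq : v1 d ^ 2 + v2 d ^ 2 < eps ^ 2) by nra.
  unfold vnorm. rewrite <- (sqrt_pow2 eps) by lra.
  apply sqrt_lt_1_alt. split; [|exact Hsq].
  pose proof (pow2_ge_0 (v1 d)). pose proof (pow2_ge_0 (v2 d)). lra.
Qed.
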